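(* Let $\Phi=(A;\{E_i\}_{i=0}^d;A^*;\{E^*_i\}_{i=0}^d)$ be a tridiagonal system on $V$ with $d\ge1$, such that $(A,A^* )$ satisfies the $q$-Serre relations, with $E_iV$ the eigenspace of $A$ for $\theta_i=q^{2i-d}$ and $E^*_iV$ the eigenspace of $A^*$ for $\theta^*_i=q^{d-2i}$. Let $\{U_i\}_{i=0}^d$ be its split decomposition, $K:V\to V$ the linear map acting on $U_i$ as $q^{d-2i}I$, $t$ a scalar, $B=A$, $B^*=tA^*+(1-t)K$, $E'_i$ the primitive idempotent of $B^*$ for $\theta^*_i$, and $\Phi'=(B;\{E_i\}_{i=0}^d;B^*;\{E'_i\}_{i=0}^d)$. Then the split sequences $\{\zeta_i\}_{i=0}^d$ of $\Phi$ and $\{\zeta'_i\}_{i=0}^d$ of $\Phi'$ satisfy $\zeta'_i=t^i\zeta_i$ for $0\le i\le d$.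
   Context: $\mathcal K$ is an algebraically closed field; $V$ is a nonzero finite-dimensional vector space over $\mathcal K$; $q\in\mathcal K$ is nonzero and not a root of unity; $[3]_q=q^2+1+q^{-2}$. The $q$-Serre relations for $(X,Y)$: $X^3Y-[3]_qX^2YX+[3]_qXYX^2-YX^3=0$ and $Y^3X-[3]_qY^2XY+[3]_qYXY^2-XY^3=0$. Primitive idempotent of a diagonalizable $X$ for eigenvalue $\lambda_i$: $\prod_{j\ne i}\frac{X-\lambda_jI}{\lambda_i-\lambda_j}$. A tridiagonal system on $V$ is a sequence $(A;\{E_i\}_{i=0}^d;A^*;\{E^*_i\}_{i=0}^d)$ with $A,A^*$ diagonalizable, $\{E_i\}$, $\{E^*_i\}$ orderings of their primitive idempotents, $E_iA^*E_j=0$ and $E^*_iAE^*_j=0$ when $|i-j|>1$, and no subspaces other than $0,V$ invariant under both $A$ and $A^*$. Split decomposition: $U_i=(E^*_0V+\cdots+E^*_iV)\cap(E_iV+\cdots+E_dV)$; known: $V=U_0\oplus\cdots\oplus U_d$, $U_0=E^*_0V$ is one-dimensional, $(A-\theta_iI)U_i\subseteq U_{i+1}$, $(A^*-\theta^*_iI)U_i\subseteq U_{i-1}$ ($U_{-1}=U_{d+1}=0$). It is a fact (proved in the paper) that $B^*$ is diagonalizable with eigenvalues $\theta^*_0,\dots,\theta^*_d$ and $E'_0V=U_0$ is one-dimensional. Split sequence of a sequence $(X;\{F_i\};X^*;\{F^*_i\})$ with $X,X^*$ diagonalizable, $F_i$ (resp. $F^*_i$) primitive idempotents of $X$ (resp.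 $X^*$) for eigenvalues $\lambda_i$ (resp. $\lambda^*_i$), and $\dim F^*_0V=1$: with $\tau_i(x)=\prod_{j=0}^{i-1}(x-\lambda_j)$, $F^*_0\tau_i(X)$ acts on $F^*_0V$ as a scalar $\chi_i$, and $\zeta_i=\prod_{j=1}^i(\lambda^*_0-\lambda^*_j)\chi_i$. *)

(* Defs.v *)
From HB Require Import structures.
From mathcomp Require Import all_boot all_order all_algebra.
Set Implicit Arguments. Unset Strict Implicit. Unset Printing Implicit Defensive.
Import Order.TTheory GRing.Theory Num.Theory.
Local Open Scope ring_scope.

(* Convention: V = 'rV[K]_n.+1 (row vectors, nonzero space); a linear map is a
   square matrix M acting by v |-> v *m M.  Hence the operator composite XY
   ("apply Y, then X") is the matrix Y *m X, and the subspace E V is the row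
   space of E. *)

Section Defs.
Variables (K : fieldType) (n : nat).

Definition prim_idem (X : 'M[K]_n.+1) (lam : nat -> K) (d i : nat) : 'M[K]_n.+1 :=
  \prod_(j < d.+1 | (j : nat) != i) ((lam i - lam j)^-1 *: (X - (lam j)%:M)).

Definition eig_ordering (X : 'M[K]_n.+1) (lam : nat -> K) (d : nat) : Prop :=
  diagonalizable X /\
  (forall i j, (i <= d)%N -> (j <= d)%N -> lam i = lam j -> i = j) /\
  (forall i, (i <= d)%N -> eigenvalue X (lam i)) /\
  (forall a, eigenvalue X a -> exists2 i, (i <= d)%N & a = lam i).

Definition tridiagonal_system (X : 'M[K]_n.+1) (lam : nat -> K)
    (Xs : 'M[K]_n.+1) (lams : nat -> K) (d : nat) : Prop :=
  eig_ordering X lam d /\ eig_ordering Xs lams d /\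
  (forall i j, (i <= d)%N -> (j <= d)%N -> (j.+1 < i)%N \/ (i.+1 < j)%N ->
     prim_idem X lam d i *m Xs *m prim_idem X lam d j = 0) /\
  (forall i j, (i <= d)%N -> (j <= d)%N -> (j.+1 < i)%N \/ (i.+1 < j)%N ->
     prim_idem Xs lams d i *m X *m prim_idem Xs lams d j = 0) /\
  (forall W : 'M[K]_n.+1, (W *m X <= W)%MS -> (W *m Xs <= W)%MS ->
     (W == (0 : 'M[K]_n.+1))%MS \/ (W == (1%:M : 'M[K]_n.+1))%MS).

(* q-Serre relations for (X, Y) (written in operator form; each relation is
   invariant, up to sign, under reversing products) *)
Definition q_serre (q : K) (X Y : 'M[K]_n.+1) : Prop :=
  let c := q ^+ 2 + 1 + q ^- 2 in
  X ^+ 3 * Y - c *: (X ^+ 2 * Y * X) + c *: (X * Y * X ^+ 2) - Y * X ^+ 3 = 0 /\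
  Y ^+ 3 * X - c *: (Y ^+ 2 * X * Y) + c *: (Y * X * Y ^+ 2) - X * Y ^+ 3 = 0.

Definition split_U (X : 'M[K]_n.+1) (lam : nat -> K)
    (Xs : 'M[K]_n.+1) (lams : nat -> K) (d i : nat) : 'M[K]_n.+1 :=
  ((\sum_(j < d.+1 | (j <= i)%N) prim_idem Xs lams d j)
    :&: (\sum_(j < d.+1 | (i <= j)%N) prim_idem X lam d j))%MS.

Definition tau (X : 'M[K]_n.+1) (lam : nat -> K) (i : nat) : 'M[K]_n.+1 :=
  \prod_(j < i) (X - (lam j)%:M).

Definition split_sequence (X : 'M[K]_n.+1) (lam : nat -> K)
    (Xs : 'M[K]_n.+1) (lams : nat -> K) (d : nat) (zeta : nat -> K) : Prop :=
  forall i, (i <= d)%N ->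
    exists chi : K,
      (forall v : 'rV[K]_n.+1, (v <= prim_idem Xs lams d 0)%MS ->
         v *m (tau X lam i *m prim_idem Xs lams d 0) = chi *: v) /\
      zeta i = (\prod_(1 <= j < i.+1) (lams 0 - lams j)) * chi.

End Defs.

(* Main.v *)
Require Import Defs.
From HB Require Import structures.
From mathcomp Require Import all_boot all_order all_algebra.
Set Implicit Arguments. Unset Strict Implicit. Unset Printing Implicit Defensive.
Import Order.TTheory GRing.Theory Num.Theory.
Local Open Scope ring_scope.

Section Gen.
Variables (K : fieldType) (n : nat).

Lemma subB_sub m1 m2 (A B : 'M[K]_(m1, n.+1)) (C : 'M[K]_(m2, n.+1)) :
  (A <= C)%MS -> (B <= C)%MS -> ((A - B)%R <= C)%MS.
Proof.
move=> HA HB; apply: addmx_sub => //.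
by rewrite -scaleN1r; apply: scalemx_sub.
Qed.

Lemma eig_horner m (X : 'M[K]_n.+1) (W : 'M[K]_(m, n.+1)) r (p : {poly K}) :
  W *m X = r *: W -> W *m horner_mx X p = p.[r] *: W.
Proof.
move=> HW; elim/poly_ind: p => [|p c IH].
  by rewrite rmorph0 mulmx0 horner0 scale0r.
rewrite rmorphD rmorphM /= horner_mx_X horner_mx_C hornerMXaddC.
rewrite mulmxDr -mulmxE mulmxA IH -scalemxAl HW mul_mx_scalar.
by rewrite scalerA scalerDl.
Qed.

Definition pe (lam : nat -> K) (d i : nat) : {poly K} :=
  \prod_(j < d.+1 | (j : nat) != i) ((lam i - lam j)^-1 *: ('X - (lam j)%:P)).

Lemma prim_idem_horner (X : 'M[K]_n.+1) lam d i :
  prim_idem X lam d i = horner_mx X (pe lam d i).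
Proof.
rewrite /prim_idem /pe rmorph_prod; apply: eq_bigr => j _.
by symmetry; rewrite /= horner_mxZ rmorphB /= horner_mx_X horner_mx_C.
Qed.

Definition distinct (lam : nat -> K) d :=
  forall i j, (i <= d)%N -> (j <= d)%N -> lam i = lam j -> i = j.

Lemma pe_eval lam d i k : distinct lam d -> (i <= d)%N -> (k <= d)%N ->
  (pe lam d i).[lam k] = (i == k)%:R.
Proof.
move=> Hd Hi Hk; rewrite /pe horner_prod.
case: eqP => [<-|Hik].
  rewrite big1 // => j Hj; rewrite hornerZ hornerXsubC mulVf //.
  rewrite subr_eq0; apply/eqP => /Hd; move: Hj => /eqP Hj.
  by move=> H; apply: Hj; rewrite H //; rewrite -ltnS.
have Hk' : (k < d.+1)%N by [].
rewrite (bigD1 (Ordinal Hk')) /=; last by apply/eqP => H; apply: Hik.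
by rewrite hornerZ hornerXsubC subrr mulr0 mul0r.
Qed.

Lemma Ann (X : 'M[K]_n.+1) lam d (p : {poly K}) : eig_ordering X lam d ->
  (forall k, (k <= d)%N -> p.[lam k] = 0) -> horner_mx X p = 0.
Proof.
move=> [Hdiag [Hdist [Heig Hall]]] Hp.
have [rs _ rsP] := (@diagonalizablePeigen K n.+1 X).1 Hdiag.
have : (1%:M <= kermx (horner_mx X p))%MS.
  rewrite -rsP; elim/big_rec: _ => [|r W _ HW]; first by rewrite sub0mx.
  rewrite addsmx_sub HW andbT.
  case Hr: (eigenvalue X r); last first.
    by move/negbT: Hr; rewrite negbK => /eqP ->; rewrite sub0mx.
  have [k Hk ->] := Hall r Hr.
  have HE : eigenspace X (lam k) *m X = lam k *: eigenspace X (lam k).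
    exact/eigenspaceP.
  by rewrite sub_kermx (eig_horner p HE) Hp // scale0r.
by rewrite sub_kermx mul1mx => /eqP.
Qed.

End Gen.

Section Gen2.
Variables (K : fieldType) (n : nat).

Lemma prim_sum (X : 'M[K]_n.+1) lam d : eig_ordering X lam d ->
  \sum_(i < d.+1) prim_idem X lam d i = 1.
Proof.
move=> HX; have Hd : distinct lam d by case: HX => _ [].
under eq_bigr do rewrite prim_idem_horner.
rewrite -rmorph_sum; apply/eqP; rewrite -subr_eq0 -(rmorph1 (horner_mx X)) -rmorphB.
apply/eqP; apply: (Ann HX) => k Hk.
rewrite hornerD hornerN hornerC horner_sum.
have Hk' : (k < d.+1)%N by [].
rewrite (bigD1 (Ordinal Hk')) //= pe_eval // eqxx big1 ?addr0 ?subrr //.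
move=> j /eqP Hj; rewrite pe_eval //; last by rewrite -ltnS.
case: eqP => // Hjk; exfalso; apply: Hj; exact: val_inj.
Qed.

Lemma prim_eig (X : 'M[K]_n.+1) lam d j : eig_ordering X lam d -> (j <= d)%N ->
  prim_idem X lam d j *m X = lam j *: prim_idem X lam d j.
Proof.
move=> HX Hj; have Hd : distinct lam d by case: HX => _ [].
have H0 : horner_mx X (pe lam d j * ('X - (lam j)%:P)) = 0.
  apply: (Ann HX) => k Hk; rewrite hornerM hornerXsubC pe_eval //.
  by case: eqP => [->|_]; rewrite ?subrr ?mulr0 ?mul0r.
move: H0; rewrite rmorphM rmorphB /= horner_mx_X horner_mx_C -prim_idem_horner.
rewrite mulrBr -!mulmxE mul_mx_scalar => /eqP; rewrite subr_eq0 => /eqP.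
done.
Qed.

Lemma prim_eigB (X : 'M[K]_n.+1) lam d j c : eig_ordering X lam d -> (j <= d)%N ->
  prim_idem X lam d j *m (X - c%:M) = (lam j - c) *: prim_idem X lam d j.
Proof.
by move=> HX Hj; rewrite mulmxBr prim_eig // mul_mx_scalar scalerBl.
Qed.

Lemma mix (F : nat -> 'M[K]_n.+1) d (Y : 'M[K]_n.+1) j (P : pred 'I_d.+1) :
  \sum_(k < d.+1) F k = 1 ->
  (forall k : 'I_d.+1, ~~ P k -> F j *m Y *m F k = 0) ->
  (F j *m Y <= \sum_(k < d.+1 | P k) F k)%MS.
Proof.
move=> Hs HF.
have -> : F j *m Y = F j *m Y *m (\sum_(k < d.+1) F k) by rewrite Hs; apply/esym/mulmx1.
rewrite mulmx_sumr.
apply: summx_sub => k _; case Pk: (P k).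
  by apply: (sumsmx_sup k) => //; apply: submxMl.
by rewrite HF ?Pk // sub0mx.
Qed.

End Gen2.

Section Split.
Variables (K : fieldType) (n : nat).
Variables (X Xs : 'M[K]_n.+1) (lam lams : nat -> K) (d : nat).
Hypothesis HT : tridiagonal_system X lam Xs lams d.

Let U i := split_U X lam Xs lams d i.

Lemma split_up i (w : 'rV[K]_n.+1) : (i < d)%N -> (w <= U i)%MS ->
  (w *m (X - (lam i)%:M) <= U i.+1)%MS.
Proof.
case: HT => HX [HXs [Htri1 [Htri2 _]]].
move=> Hi; rewrite /U /split_U !sub_capmx => /andP[HS HTT]; apply/andP; split.
  apply: submx_trans (submxMr _ HS) _; rewrite sumsmxMr.
  apply/sumsmx_subP => j Hj; rewrite mulmxBr; apply: subB_sub.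
    apply: mix; first exact: prim_sum.
    move=> k; rewrite -ltnNge => Hk; apply: Htri2.
    - by rewrite -ltnS.
    - by rewrite -ltnS.
    - by right; apply: leq_ltn_trans Hk; rewrite ltnS.
  rewrite mul_mx_scalar; apply: scalemx_sub.
  by apply: (sumsmx_sup j) => //; apply: leqW.
apply: submx_trans (submxMr _ HTT) _; rewrite sumsmxMr.
apply/sumsmx_subP => j Hj; rewrite prim_eigB //; last by rewrite -ltnS.
case: (ltngtP i j) Hj => // [Hij _|Hij _].
  by apply: scalemx_sub; apply: (sumsmx_sup j).
have -> : lam j - lam i = 0 by apply/eqP; rewrite subr_eq0 Hij.
by rewrite scale0r sub0mx.
Qed.

Lemma split_down i (w : 'rV[K]_n.+1) : (0 < i)%N -> (i <= d)%N -> (w <= U i)%MS ->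
  (w *m (Xs - (lams i)%:M) <= U i.-1)%MS.
Proof.
case: HT => HX [HXs [Htri1 [Htri2 _]]].
move=> Hi0 Hi; rewrite /U /split_U !sub_capmx => /andP[HS HTT]; apply/andP; split.
  apply: submx_trans (submxMr _ HS) _; rewrite sumsmxMr.
  apply/sumsmx_subP => j Hj; rewrite prim_eigB //; last by rewrite -ltnS.
  case: (ltngtP j i) Hj => // [Hij _|Hij _].
    by apply: scalemx_sub; apply: (sumsmx_sup j) => //; rewrite -ltnS prednK.
  have -> : lams j - lams i = 0 by apply/eqP; rewrite subr_eq0 Hij.
  by rewrite scale0r sub0mx.
apply: submx_trans (submxMr _ HTT) _; rewrite sumsmxMr.
apply/sumsmx_subP => j Hj; rewrite mulmxBr; apply: subB_sub.
  apply: mix; first exact: prim_sum.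
  move=> k; rewrite -ltnNge => Hk; apply: Htri1.
  - by rewrite -ltnS.
  - by rewrite -ltnS.
  - left; apply: leq_trans Hj; rewrite -(prednK Hi0); exact: Hk.
rewrite mul_mx_scalar; apply: scalemx_sub.
apply: (sumsmx_sup j) => //; apply: leq_trans Hj; exact: leq_pred.
Qed.

Lemma split_U0 (w : 'rV[K]_n.+1) : (w <= U 0)%MS -> w *m Xs = lams 0 *: w.
Proof.
case: HT => HX [HXs _].
rewrite /U /split_U sub_capmx => /andP[HS _].
apply/eqP; rewrite -subr_eq0 -mul_mx_scalar -mulmxBr; apply/eqP.
apply/sub_kermxP; apply: submx_trans HS _.
apply/sumsmx_subP => j; rewrite leqn0 => /eqP Hj.
rewrite sub_kermx prim_eigB //; last by rewrite Hj.
have -> : lams j - lams 0 = 0 by apply/eqP; rewrite subr_eq0 Hj.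
by rewrite scale0r.
Qed.

Lemma split_in0 (w : 'rV[K]_n.+1) : (w <= prim_idem Xs lams d 0)%MS -> (w <= U 0)%MS.
Proof.
case: HT => HX [HXs _] Hw.
rewrite /U /split_U sub_capmx; apply/andP; split.
  by apply: (sumsmx_sup ord0).
apply: submx_trans (submx1 w) _.
have -> : (1%:M : 'M[K]_n.+1) = \sum_(j < d.+1) prim_idem X lam d j by rewrite prim_sum.
apply: summx_sub => j _; exact: (sumsmx_sup j).
Qed.

End Split.

Section G.
Variables (K : fieldType) (n : nat).
Variables (S T : 'M[K]_n.+1) (c : nat -> K) (d : nat) (t : K) (U : nat -> 'M[K]_n.+1).
Hypothesis H1 : forall i, (0 < i)%N -> (i <= d)%N -> forall w : 'rV[K]_n.+1,
  (w <= U i)%MS -> (w *m (T - (c i)%:M) <= U i.-1)%MS.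
Hypothesis H2 : forall i, (i <= d)%N -> forall w : 'rV[K]_n.+1,
  (w <= U i)%MS -> w *m (S - (c i)%:M) = t *: (w *m (T - (c i)%:M)).
Hypothesis H0 : forall w : 'rV[K]_n.+1, (w <= U 0)%MS -> w *m T = c 0 *: w.

Definition pJ (J : pred 'I_d.+1) : {poly K} :=
  \prod_(j < d.+1 | J j) ((c 0 - c j)^-1 *: ('X - (c j)%:P)).

Lemma G_main i : (i <= d)%N -> forall (J : pred 'I_d.+1),
  (forall j : 'I_d.+1, (0 < j <= i)%N -> J j) ->
  forall w : 'rV[K]_n.+1, (w <= U i)%MS ->
  w *m horner_mx S (pJ J) = t ^+ i *: (w *m horner_mx T (pJ J)).
Proof.
elim: i => [|i IH] Hi J HJ w Hw.
  have HT0 := H0 Hw.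
  have HS0 : w *m S = c 0 *: w.
    have := H2 (leq0n d) Hw; rewrite !mulmxBr HT0 !mul_mx_scalar subrr scaler0.
    by move/eqP; rewrite subr_eq0 => /eqP.
  by rewrite (eig_horner _ HS0) (eig_horner _ HT0) expr0 scale1r.
have Hk : (i.+1 < d.+1)%N by [].
pose k := Ordinal Hk.
have Jk : J k by apply: HJ; rewrite /= ltnS leqnn.
rewrite /pJ (bigD1 k Jk) /= !rmorphM /= !horner_mxZ !rmorphB /= !horner_mx_X !horner_mx_C.
rewrite -!mulmxE !mulmxA -!scalemxAr -!scalemxAl (H2 Hi Hw).
have Hw' := H1 (ltn0Sn i) Hi Hw; rewrite /= in Hw'.
rewrite -scalemxAl.
have HJ' : forall j : 'I_d.+1, (0 < j <= i)%N -> [pred j0 | J j0 & j0 != k] j.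
  move=> j /andP [Hj0 Hji] /=; rewrite HJ ?Hj0 ?(leq_trans Hji) //=.
  by apply/eqP => Hjk; move: Hji; rewrite Hjk /= ltnn.
have := IH (ltnW Hi) [pred j | J j && (j != k)] HJ' _ Hw'.
rewrite /pJ /= => ->.
rewrite !scalerA exprS -mulrA [_^-1 * _]mulrC.
reflexivity.

Qed.

End G.


Theorem lemma7p10 (K : closedFieldType) (n : nat) (q : K) (d : nat)
  (A As Km : 'M[K]_n.+1) (t : K) (zeta zeta' : nat -> K) :
  q != 0 ->
  (forall m : nat, (0 < m)%N -> q ^+ m != 1) ->
  (1 <= d)%N ->
  let th := fun i : nat => q ^ ((2 * i)%:Z - d%:Z) in
  let ths := fun i : nat => q ^ (d%:Z - (2 * i)%:Z) in
  tridiagonal_system A th As ths d ->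
  q_serre q A As ->
  (forall i, (i <= d)%N -> forall v : 'rV[K]_n.+1,
     (v <= split_U A th As ths d i)%MS -> v *m Km = ths i *: v) ->
  let Bs := t *: As + (1 - t) *: Km in
  split_sequence A th As ths d zeta ->
  split_sequence A th Bs ths d zeta' ->
  forall i, (i <= d)%N -> zeta' i = t ^+ i * zeta i.
Proof.
move=> Hq Hroot Hd th ths Htri Hserre HK Bs Hz Hz' i Hi.
have HXs : eig_ordering As ths d by case: Htri => _ [].
have Hdist : distinct ths d by case: HXs => _ [].
pose U := split_U A th As ths d.
have H2 : forall i, (i <= d)%N -> forall w : 'rV[K]_n.+1,
  (w <= U i)%MS -> w *m (Bs - (ths i)%:M) = t *: (w *m (As - (ths i)%:M)).
  move=> j Hj w Hw; rewrite /Bs !mulmxBr mulmxDr -!scalemxAr (HK j Hj w Hw).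
  rewrite !mul_mx_scalar scalerBl scale1r scalerBr.
  by rewrite [ths j *: w - _]addrC addrA addrK.
have H1 : forall i, (0 < i)%N -> (i <= d)%N -> forall w : 'rV[K]_n.+1,
  (w <= U i)%MS -> (w *m (As - (ths i)%:M) <= U i.-1)%MS.
  by move=> j Hj0 Hj w Hw; apply: split_down.
have H0 : forall w : 'rV[K]_n.+1, (w <= U 0)%MS -> w *m As = ths 0 *: w.
  by move=> w Hw; apply: (split_U0 Htri).
have [u Hu Hu0] := eigenvalueP (proj1 (proj2 (proj2 HXs)) 0 (leq0n d)).
have HuE : u *m prim_idem As ths d 0 = u.
  by rewrite prim_idem_horner (eig_horner _ Hu) pe_eval // eqxx scale1r.
have HuU : (u <= U 0)%MS.
  by apply: (split_in0 Htri); rewrite -HuE submxMl.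
have HuB : u *m Bs = ths 0 *: u.
  have := H2 0 (leq0n d) u HuU; rewrite !mulmxBr Hu !mul_mx_scalar subrr scaler0.
  by move/eqP; rewrite subr_eq0 => /eqP.
have HuE' : u *m prim_idem Bs ths d 0 = u.
  by rewrite prim_idem_horner (eig_horner _ HuB) pe_eval // eqxx scale1r.
have Htau : forall m, (m <= d)%N -> (u *m tau A th m <= U m)%MS.
  elim=> [|m IH] Hm.
    by rewrite /tau big_ord0; apply: submx_trans HuU; rewrite mulmx1.
  rewrite /tau big_ord_recr /= -/(tau A th m) -mulmxE mulmxA.
  by apply: (split_up Htri) => //; apply: IH; apply: ltnW.
have [chi [Hchi Hzeta]] := Hz i Hi.
have [chi' [Hchi' Hzeta']] := Hz' i Hi.
have Hu1 : (u <= prim_idem As ths d 0)%MS by rewrite -HuE submxMl.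
have Hu2 : (u <= prim_idem Bs ths d 0)%MS by rewrite -HuE' submxMl.
have E1 := Hchi u Hu1.
have E2 := Hchi' u Hu2.
have HJ0 : forall j : 'I_d.+1, (0 < j <= i)%N -> (fun j : 'I_d.+1 => (j : nat) != 0) j.
  by move=> j /andP [Hj _] /=; rewrite -lt0n.
have := G_main H1 H2 H0 Hi HJ0 (Htau i Hi).
rewrite -[horner_mx Bs _]/(horner_mx Bs (pe ths d 0)) -[horner_mx As _]/(horner_mx As (pe ths d 0)).
rewrite -!prim_idem_horner -!mulmxA E1 E2 scalerA => /eqP.
rewrite -subr_eq0 -scalerBl scalemx_eq0 (negbTE Hu0) orbF subr_eq0 => /eqP Hc.
by rewrite Hzeta' Hzeta Hc mulrCA.
Qed.
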